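(* Let $c\in\mathbb{R}$ and let $\gamma:(c,\infty)\to\mathbb{R}$ be a three times differentiable function such that $$\gamma\ge0,\quad\gamma'\le0,\quad\gamma''\ge0,\quad\gamma'''\le0$$ on $(c,\infty)$. Then the function $f:(-e^{-c},e^{-c})^2\to\mathbb{R}$ given by $$f(x,y)=\begin{cases} -\gamma(\log\frac1x)\cdot(2y-x)-\gamma'(\log\frac1x)\cdot\frac{1}{2x}(x-y)(2x-y), & e^{-c}>x\ge|y|,\ x\ne0,\\ -\gamma(\log(-\frac1x))\cdot(2x-y)-\gamma'(\log(-\frac1x))\cdot\frac32(y-x), & -e^{-c}<x\le-|y|,\ x\ne0,\\ 0, & x=y=0,\\ f(y,x), & \text{in the remaining cases (i.e. } |y|>|x|), \end{cases}$$ is separately convex.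
   Context: A function $f$ defined on an open set $U\subset\mathbb{R}^2$ is called separately convex if it is convex on every line segment contained in $U$ that is parallel to a coordinate axis. *)

(* Defs.v *)
From Stdlib Require Import Reals Lra.
From Coquelicot Require Import Coquelicot.
Open Scope R_scope.

Definition separately_convex (U : R -> R -> Prop) (f : R -> R -> R) : Prop :=
  forall (p1 p2 q1 q2 : R),
    (p1 = q1 \/ p2 = q2) ->
    (forall t, 0 <= t <= 1 -> U (p1 + t * (q1 - p1)) (p2 + t * (q2 - p2))) ->
    forall t, 0 <= t <= 1 ->
      f (p1 + t * (q1 - p1)) (p2 + t * (q2 - p2))
        <= (1 - t) * f p1 p2 + t * f q1 q2.

Definition square (c : R) (x y : R) : Prop :=
  - exp (- c) < x < exp (- c) /\ - exp (- c) < y < exp (- c).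

(* The formula for |y| <= |x| (cases 1, 2, 3 of the paper).  gamma1 stands for gamma'. *)
Definition f_main (gamma gamma1 : R -> R) (x y : R) : R :=
  if Req_EM_T x 0 then 0
  else if Rlt_dec 0 x then
    - gamma (ln (1 / x)) * (2 * y - x)
    - gamma1 (ln (1 / x)) * (1 / (2 * x)) * (x - y) * (2 * x - y)
  else
    - gamma (ln (- (1 / x))) * (2 * x - y)
    - gamma1 (ln (- (1 / x))) * (3 / 2) * (y - x).

Definition f_fun (gamma gamma1 : R -> R) (x y : R) : R :=
  if Rle_dec (Rabs y) (Rabs x) then f_main gamma gamma1 x y
  else f_main gamma gamma1 y x.

(* Main.v *)
Require Import Defs.
From Stdlib Require Import Reals Lra.
From Coquelicot Require Import Coquelicot.
Open Scope R_scope.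


Definition Sp (h D : R -> R) (J : R -> Prop) : Prop :=
  forall p q, J p -> J q -> p < q ->
    D p * (q - p) <= h q - h p <= D q * (q - p).

Lemma Sp_sub h D (J J' : R -> Prop) :
  (forall x, J' x -> J x) -> Sp h D J -> Sp h D J'.
Proof. intros HJ HS p q Hp Hq Hpq. apply HS; auto. Qed.

Lemma Sp_exth h h' D (J : R -> Prop) :
  (forall x, J x -> h x = h' x) -> Sp h D J -> Sp h' D J.
Proof. intros He HS p q Hp Hq Hpq. rewrite <- (He p Hp), <- (He q Hq). auto. Qed.

Lemma Sp_extD h D D' (J : R -> Prop) :
  (forall x, J x -> D x = D' x) -> Sp h D J -> Sp h D' J.
Proof. intros He HS p q Hp Hq Hpq. rewrite <- (He p Hp), <- (He q Hq). auto. Qed.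

Lemma Sp_mono h D (J : R -> Prop) p q : Sp h D J -> J p -> J q -> p <= q -> D p <= D q.
Proof.
  intros HS Hp Hq Hpq. destruct Hpq as [Hlt|Heq].
  - destruct (HS p q Hp Hq Hlt) as [A B].
    assert (D p * (q - p) <= D q * (q - p)) by lra.
    apply Rmult_le_reg_r with (q - p); lra.
  - subst; lra.
Qed.

Lemma Sp_glue h D1 D2 (J1 J2 : R -> Prop) w :
  J1 w -> J2 w -> (forall x, J1 x -> x <= w) -> (forall x, J2 x -> w <= x) ->
  Sp h D1 J1 -> Sp h D2 J2 -> D1 w <= D2 w ->
  Sp h (fun x => if Rle_dec x w then D1 x else D2 x) (fun x => J1 x \/ J2 x).
Proof.
  intros H1w H2w HJ1 HJ2 S1 S2 Hw p q Hp Hq Hpq.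
  destruct Hp as [Hp|Hp]; destruct Hq as [Hq|Hq].
  - assert (q <= w) by auto.
    destruct (Rle_dec p w); [|lra]. destruct (Rle_dec q w); [|lra]. auto.
  - assert (p <= w) by auto. assert (w <= q) by auto.
    destruct (Rle_dec p w); [|lra].
    destruct (Rle_dec q w).
    + assert (q = w) by lra. subst q. auto.
    + destruct (Req_dec p w) as [E|E].
      * subst p. destruct (S2 w q H2w Hq Hpq) as [A B]. split; nra.
      * assert (Hpw : p < w) by lra.
        destruct (Req_dec q w) as [E2|E2]; [lra|].
        assert (Hwq : w < q) by lra.
        destruct (S1 p w Hp H1w Hpw) as [A B].
        destruct (S2 w q H2w Hq Hwq) as [C F].
        assert (D1 p <= D1 w) by (apply (Sp_mono h D1 J1); auto; lra).
        assert (D2 w <= D2 q) by (apply (Sp_mono h D2 J2); auto; lra).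
        split; nra.
  - assert (w <= p) by auto. assert (q <= w) by auto. lra.
  - assert (w <= p) by auto. destruct (Rle_dec q w). { assert (w <= q) by auto. lra. }
    destruct (Rle_dec p w).
    + assert (p = w) by lra. subst p. destruct (S2 w q H2w Hq Hpq) as [A B]. split; nra.
    + auto.
Qed.

Lemma Sp_ext_right h D (J : R -> Prop) w Dw :
  (forall x, J x -> x < w) ->
  (forall p, J p -> D p * (w - p) <= h w - h p <= Dw * (w - p)) ->
  Sp h D J ->
  Sp h (fun x => if Req_EM_T x w then Dw else D x) (fun x => J x \/ x = w).
Proof.
  intros HJ Hw HS p q Hp Hq Hpq.
  destruct Hp as [Hp|Hp]; destruct Hq as [Hq|Hq].
  - assert (p < w) by auto. assert (q < w) by auto.
    destruct (Req_EM_T p w); [lra|]. destruct (Req_EM_T q w); [lra|]. auto.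
  - subst q. assert (p < w) by auto.
    destruct (Req_EM_T p w); [lra|]. destruct (Req_EM_T w w); [|lra]. auto.
  - subst p. assert (q < w) by auto. lra.
  - lra.
Qed.

Lemma Sp_ext_left h D (J : R -> Prop) w Dw :
  (forall x, J x -> w < x) ->
  (forall q, J q -> Dw * (q - w) <= h q - h w <= D q * (q - w)) ->
  Sp h D J ->
  Sp h (fun x => if Req_EM_T x w then Dw else D x) (fun x => x = w \/ J x).
Proof.
  intros HJ Hw HS p q Hp Hq Hpq.
  destruct Hp as [Hp|Hp]; destruct Hq as [Hq|Hq].
  - lra.
  - subst p. assert (w < q) by auto.
    destruct (Req_EM_T q w); [lra|]. destruct (Req_EM_T w w); [|lra]. auto.
  - subst q. assert (w < p) by auto. lra.
  - assert (w < p) by auto. assert (w < q) by auto.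
    destruct (Req_EM_T p w); [lra|]. destruct (Req_EM_T q w); [lra|]. auto.
Qed.

Lemma mvt_le (P dP : R -> R) p q :
  p < q -> (forall x, p <= x <= q -> is_derive P x (dP x)) ->
  exists xi, p <= xi <= q /\ P q - P p = dP xi * (q - p).
Proof.
  intros Hpq Hd.
  destruct (MVT_gen P p q dP) as [xi [Hxi Heq]].
  - intros x Hx. rewrite Rmin_left in Hx by lra. rewrite Rmax_right in Hx by lra.
    apply Hd; lra.
  - intros x Hx. rewrite Rmin_left in Hx by lra. rewrite Rmax_right in Hx by lra.
    apply continuity_pt_filterlim. apply (@ex_derive_continuous R_AbsRing R_NormedModule P x).
    eexists. apply Hd; lra.
  - exists xi. rewrite Rmin_left in Hxi by lra. rewrite Rmax_right in Hxi by lra. auto.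
Qed.

Lemma Sp_piece (P dP d2P : R -> R) (J : R -> Prop) :
  (forall x y z, J x -> J y -> x <= z <= y -> J z) ->
  (forall x, J x -> is_derive P x (dP x) /\ is_derive dP x (d2P x) /\ 0 <= d2P x) ->
  Sp P dP J.
Proof.
  intros Hc Hd p q Hp Hq Hpq.
  assert (Hmono : forall x y, J x -> J y -> x <= y -> dP x <= dP y).
  { intros x y Hx Hy [Hxy|Hxy]; [|subst; lra].
    destruct (mvt_le dP d2P x y Hxy) as [eta [He Heq]].
    - intros z Hz. apply Hd. apply (Hc x y z); auto.
    - assert (J eta) by (apply (Hc x y eta); auto).
      assert (0 <= d2P eta) by (apply Hd; auto). nra. }
  destruct (mvt_le P dP p q Hpq) as [xi [Hx Heq]].
  - intros z Hz. apply Hd. apply (Hc p q z); auto.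
  - assert (J xi) by (apply (Hc p q xi); auto).
    assert (dP p <= dP xi) by (apply Hmono; auto; lra).
    assert (dP xi <= dP q) by (apply Hmono; auto; lra).
    split; nra.
Qed.

Lemma Sp_convex h D l r :
  Sp h D (fun x => l < x < r) ->
  forall x y t, l < x < r -> l < y < r -> 0 <= t <= 1 ->
    h (x + t * (y - x)) <= (1 - t) * h x + t * h y.
Proof.
  intros HS x y t Hx Hy Ht.
  set (z := x + t * (y - x)).
  assert (Hz : l < z < r).
  { unfold z. destruct Ht as [Ht0 Ht1]. destruct Ht0 as [Ht0|Ht0].
    - assert (0 <= (1 - t) * (x - l)) by (apply Rmult_le_pos; lra).
      assert (0 < t * (y - l)) by (apply Rmult_lt_0_compat; lra).
      assert (0 <= (1 - t) * (r - x)) by (apply Rmult_le_pos; lra).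
      assert (0 < t * (r - y)) by (apply Rmult_lt_0_compat; lra).
      split; nra.
    - subst t. lra. }
  assert (Hsup : forall s, l < s < r -> h z + D z * (s - z) <= h s).
  { intros s Hs. destruct (Rtotal_order s z) as [H|[H|H]].
    - destruct (HS s z Hs Hz H). nra.
    - subst. lra.
    - destruct (HS z s Hz Hs H). nra. }
  pose proof (Hsup x Hx). pose proof (Hsup y Hy).
  assert ((1 - t) * (x - z) + t * (y - z) = 0) by (unfold z; ring).
  assert ((1 - t) * (h z + D z * (x - z)) <= (1 - t) * h x) by (apply Rmult_le_compat_l; lra).
  assert (t * (h z + D z * (y - z)) <= t * h y) by (apply Rmult_le_compat_l; lra).
  assert (D z * ((1 - t) * (x - z) + t * (y - z)) = 0) by (rewrite H1; ring).
  nra.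
Qed.

Definition phi (g g1 : R -> R) a t := - g (- ln t) * (2*a - t) - g1 (- ln t) * (1/(2*t)) * (t - a) * (2*t - a).
Definition dphi (g g1 g2 : R -> R) a t := g (-ln t) - g1(-ln t) * (2 - 2*a/t - a^2/(2*t^2)) + g2(-ln t)*(1 - 3*a/(2*t) + a^2/(2*t^2)).
Definition d2phi (g1 g2 g3 : R -> R) a t := (- g1 (-ln t) * (t+a)^2 + g2 (-ln t) *(t-a)*(4*t+3*a)/2 - g3 (-ln t)*(t-a)*(2*t-a)/2) / t^3.

Definition psi (g g1 : R -> R) a t := - g (- ln (- t)) * (2*t - a) - g1 (- ln (- t)) * (3/2) * (a - t).
Definition dpsi (g g1 g2 : R -> R) a t := -2 * g (- ln (- t)) + g1 (- ln (- t)) * (7/2 - a/t) - (3/2) * g2 (- ln (- t)) * (1 - a/t).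
Definition d2psi (g1 g2 g3 : R -> R) a t := (g1 (- ln (- t)) * (2*t+a) - g2 (- ln (- t)) * (7*t+a)/2 + (3/2) * g3 (- ln (- t)) * (t-a)) / t^2.

Definition mP (g g1 : R -> R) a t := - g (- ln a) * (2*t - a) - g1 (- ln a) * (1/(2*a)) * (a - t) * (2*a - t).
Definition dmP (g g1 : R -> R) a t := -2 * g (- ln a) - g1 (- ln a) * (2*t - 3*a) / (2*a).
Definition nP (g g1 : R -> R) a t := - g (- ln (- a)) * (2*a - t) - g1 (- ln (- a)) * (3/2) * (t - a).
Definition dnP (g g1 : R -> R) a (t : R) := g (- ln (- a)) - (3/2) * g1 (- ln (- a)).

Lemma Derive_eq c (F F1 : R -> R) y : (forall t, c < t -> is_derive F t (F1 t)) -> c < y -> Derive (fun x => F x) y = F1 y.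
Proof. intros H Hy. apply is_derive_unique. apply (H y Hy). Qed.
Lemma exd c (F F1 : R -> R) y : (forall t, c < t -> is_derive F t (F1 t)) -> c < y -> ex_derive (fun x => F x) y.
Proof. intros H Hy. eexists. apply (H y Hy). Qed.

Lemma phi_d c g g1 g2 a t :
  (forall t, c < t -> is_derive g t (g1 t)) ->
  (forall t, c < t -> is_derive g1 t (g2 t)) ->
  0 < t -> c < - ln t -> is_derive (phi g g1 a) t (dphi g g1 g2 a t).
Proof.
  intros D1 D2 Ht Hc. unfold phi, dphi. auto_derive.
  - repeat split; try (eapply exd; eauto); nra.
  - rewrite (Derive_eq c g g1) by auto. rewrite (Derive_eq c g1 g2) by auto. field. lra.
Qed.
Lemma dphi_d c g g1 g2 g3 a t :
  (forall t, c < t -> is_derive g t (g1 t)) ->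
  (forall t, c < t -> is_derive g1 t (g2 t)) ->
  (forall t, c < t -> is_derive g2 t (g3 t)) ->
  0 < t -> c < - ln t -> is_derive (dphi g g1 g2 a) t (d2phi g1 g2 g3 a t).
Proof.
  intros D1 D2 D3 Ht Hc. unfold dphi, d2phi. auto_derive.
  - repeat split; try (eapply exd; eauto); nra.
  - rewrite (Derive_eq c g g1) by auto. rewrite (Derive_eq c g1 g2) by auto. rewrite (Derive_eq c g2 g3) by auto. field. lra.
Qed.
Lemma psi_d c g g1 g2 a t :
  (forall t, c < t -> is_derive g t (g1 t)) ->
  (forall t, c < t -> is_derive g1 t (g2 t)) ->
  t < 0 -> c < - ln (- t) -> is_derive (psi g g1 a) t (dpsi g g1 g2 a t).
Proof.
  intros D1 D2 Ht Hc. unfold psi, dpsi. auto_derive.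
  - repeat split; try (eapply exd; eauto); nra.
  - rewrite (Derive_eq c g g1) by auto. rewrite (Derive_eq c g1 g2) by auto. field. lra.
Qed.
Lemma dpsi_d c g g1 g2 g3 a t :
  (forall t, c < t -> is_derive g t (g1 t)) ->
  (forall t, c < t -> is_derive g1 t (g2 t)) ->
  (forall t, c < t -> is_derive g2 t (g3 t)) ->
  t < 0 -> c < - ln (- t) -> is_derive (dpsi g g1 g2 a) t (d2psi g1 g2 g3 a t).
Proof.
  intros D1 D2 D3 Ht Hc. unfold dpsi, d2psi. auto_derive.
  - repeat split; try (eapply exd; eauto); nra.
  - rewrite (Derive_eq c g g1) by auto. rewrite (Derive_eq c g1 g2) by auto. rewrite (Derive_eq c g2 g3) by auto. field. lra.
Qed.
Lemma mP_d g g1 a t : 0 < a -> is_derive (mP g g1 a) t (dmP g g1 a t).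
Proof. intros Ha. unfold mP, dmP. auto_derive. - lra. - field. lra. Qed.
Lemma dmP_d g g1 a t : 0 < a -> is_derive (dmP g g1 a) t (- g1 (- ln a) / a).
Proof. intros Ha. unfold dmP. auto_derive. - lra. - field. lra. Qed.
Lemma nP_d g g1 a t : is_derive (nP g g1 a) t (dnP g g1 a t).
Proof. unfold nP, dnP. auto_derive. - auto. - ring. Qed.
Lemma dnP_d g g1 a t : is_derive (dnP g g1 a) t 0.
Proof. unfold dnP. auto_derive. - auto. - ring. Qed.

Lemma d2phi_nn g1 g2 g3 a t : 0 < t -> Rabs a <= t ->
  g1 (- ln t) <= 0 -> 0 <= g2 (- ln t) -> g3 (- ln t) <= 0 -> 0 <= d2phi g1 g2 g3 a t.
Proof.
  intros Ht Ha G1 G2 G3. unfold d2phi.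
  assert (-t <= a <= t) by (pose proof (Rle_abs a); pose proof (Rle_abs (-a)); rewrite Rabs_Ropp in *; lra).
  assert (0 <= - g1 (- ln t) * (t+a)^2) by (apply Rmult_le_pos; [lra|apply pow2_ge_0]).
  assert (0 <= (t - a) * (4*t+3*a)) by (apply Rmult_le_pos; lra).
  assert (0 <= (t - a) * (2*t-a)) by (apply Rmult_le_pos; lra).
  assert (0 <= g2 (- ln t) * ((t - a) * (4*t+3*a))) by (apply Rmult_le_pos; lra).
  assert (0 <= - g3 (- ln t) * ((t - a) * (2*t-a))) by (apply Rmult_le_pos; lra).
  unfold Rdiv. apply Rmult_le_pos.
  - nra.
  - left. apply Rinv_0_lt_compat. apply pow_lt. lra.
Qed.

Lemma d2psi_nn g1 g2 g3 a t : t < 0 -> Rabs a <= - t ->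
  g1 (- ln (- t)) <= 0 -> 0 <= g2 (- ln (- t)) -> g3 (- ln (- t)) <= 0 -> 0 <= d2psi g1 g2 g3 a t.
Proof.
  intros Ht Ha G1 G2 G3. unfold d2psi.
  assert (t <= a <= -t) by (pose proof (Rle_abs a); pose proof (Rle_abs (-a)); rewrite Rabs_Ropp in *; lra).
  assert (0 <= - g1 (- ln (- t)) * (- (2*t+a))) by (apply Rmult_le_pos; lra).
  assert (0 <= g2 (- ln (- t)) * (- (7*t+a))) by (apply Rmult_le_pos; lra).
  assert (0 <= - g3 (- ln (- t)) * (a - t)) by (apply Rmult_le_pos; lra).
  unfold Rdiv. apply Rmult_le_pos.
  - nra.
  - left. apply Rinv_0_lt_compat. simpl; nra.
Qed.

Lemma ln_div1 x : 0 < x -> ln (1 / x) = - ln x.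
Proof. intros. unfold Rdiv. rewrite Rmult_1_l. apply ln_Rinv; auto. Qed.
Lemma ln_div1n x : x < 0 -> ln (- (1 / x)) = - ln (- x).
Proof. intros. replace (- (1 / x)) with (/ (- x)) by (field; lra). apply ln_Rinv; lra. Qed.

Lemma fmain_pos g g1 x y : 0 < x -> f_main g g1 x y = phi g g1 y x.
Proof.
  intros Hx. unfold f_main, phi. destruct (Req_EM_T x 0); [lra|].
  destruct (Rlt_dec 0 x); [|lra]. rewrite ln_div1 by lra. ring.
Qed.
Lemma fmain_neg g g1 x y : x < 0 -> f_main g g1 x y = psi g g1 y x.
Proof.
  intros Hx. unfold f_main, psi. destruct (Req_EM_T x 0); [lra|].
  destruct (Rlt_dec 0 x); [lra|]. rewrite ln_div1n by lra. ring.
Qed.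
Lemma fmain_mP g g1 a t : 0 < a -> f_main g g1 a t = mP g g1 a t.
Proof.
  intros Hx. unfold f_main, mP. destruct (Req_EM_T a 0); [lra|].
  destruct (Rlt_dec 0 a); [|lra]. rewrite ln_div1 by lra. ring.
Qed.
Lemma fmain_nP g g1 a t : a < 0 -> f_main g g1 a t = nP g g1 a t.
Proof.
  intros Hx. unfold f_main, nP. destruct (Req_EM_T a 0); [lra|].
  destruct (Rlt_dec 0 a); [lra|]. rewrite ln_div1n by lra. ring.
Qed.

Lemma fmain_anti g g1 x : x <> 0 -> f_main g g1 x (- x) = f_main g g1 (- x) x.
Proof.
  intros Hx. destruct (Rlt_dec 0 x).
  - rewrite fmain_pos by lra. rewrite fmain_neg by lra. unfold phi, psi.
    rewrite Ropp_involutive. field. lra.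
  - rewrite fmain_neg by lra. rewrite fmain_pos by lra. unfold phi, psi.
    field. lra.
Qed.

Lemma ffun_sym g g1 x y : f_fun g g1 x y = f_fun g g1 y x.
Proof.
  unfold f_fun. destruct (Rle_dec (Rabs y) (Rabs x)); destruct (Rle_dec (Rabs x) (Rabs y)); auto.
  - assert (Rabs x = Rabs y) by lra.
    destruct (Rcase_abs x); destruct (Rcase_abs y).
    + rewrite Rabs_left in H by lra. rewrite (Rabs_left y) in H by lra. assert (x = y) by lra. subst; auto.
    + rewrite Rabs_left in H by lra. rewrite (Rabs_right y) in H by lra. assert (y = - x) by lra. rewrite H0. apply fmain_anti. lra.
    + rewrite Rabs_right in H by lra. rewrite (Rabs_left y) in H by lra. assert (y = - x) by lra. rewrite H0. apply fmain_anti. lra.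
    + rewrite Rabs_right in H by lra. rewrite (Rabs_right y) in H by lra. assert (x = y) by lra. subst; auto.
  - lra.
Qed.

Lemma h_outer g g1 a t : Rabs a <= Rabs t -> f_fun g g1 a t = f_main g g1 t a.
Proof. intros H. rewrite ffun_sym. unfold f_fun. destruct (Rle_dec (Rabs a) (Rabs t)); [auto|lra]. Qed.
Lemma h_inner g g1 a t : Rabs t <= Rabs a -> f_fun g g1 a t = f_main g g1 a t.
Proof. intros H. unfold f_fun. destruct (Rle_dec (Rabs t) (Rabs a)); [auto|lra]. Qed.

Lemma cE c t : 0 < t -> t < exp (- c) -> c < - ln t.
Proof.
  intros H1 H2. assert (ln t < ln (exp (- c))) by (apply ln_increasing; auto).
  rewrite ln_exp in H. lra.
Qed.

Ltac dec_if := cbv beta; repeat match goal with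
  | |- context [Req_dec_T ?x ?y] => destruct (Req_dec_T x y); try lra
  | |- context [Rle_dec ?x ?y] => destruct (Rle_dec x y); try lra
  | |- context [Req_EM_T ?x ?y] => destruct (Req_EM_T x y); try lra
  end.

Lemma case_pos c g g1 g2 g3
  (D1 : forall t, c < t -> is_derive g t (g1 t))
  (D2 : forall t, c < t -> is_derive g1 t (g2 t))
  (D3 : forall t, c < t -> is_derive g2 t (g3 t))
  (P0 : forall t, c < t -> 0 <= g t)
  (P1 : forall t, c < t -> g1 t <= 0)
  (P2 : forall t, c < t -> 0 <= g2 t)
  (P3 : forall t, c < t -> g3 t <= 0) a :
  0 < a < exp (- c) ->
  exists D, Sp (fun t => f_fun g g1 a t) D (fun t => - exp (- c) < t < exp (- c)).
Proof.
  intros Ha. set (E := exp (- c)) in *.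
  assert (Hca : c < - ln a) by (apply cE; unfold E in *; lra).
  assert (S1 : Sp (fun t => f_fun g g1 a t) (dpsi g g1 g2 a) (fun t => - E < t <= - a)).
  { apply Sp_exth with (psi g g1 a).
    { intros t Ht. rewrite h_outer. rewrite fmain_neg by lra. reflexivity.
      rewrite (Rabs_right a) by lra. rewrite (Rabs_left t) by lra. lra. }
    apply Sp_piece with (d2P := d2psi g1 g2 g3 a).
    { intros x y z Hx Hy Hz. lra. }
    intros t Ht. assert (Hc : c < - ln (- t)) by (apply cE; unfold E in *; lra).
    split; [apply (psi_d c); auto; lra|].
    split; [apply (dpsi_d c); auto; lra|].
    apply d2psi_nn; auto; try lra. rewrite Rabs_right; lra. }
  assert (S2 : Sp (fun t => f_fun g g1 a t) (dmP g g1 a) (fun t => - a <= t <= a)).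
  { apply Sp_exth with (mP g g1 a).
    { intros t Ht. rewrite h_inner. rewrite fmain_mP by lra. reflexivity.
      rewrite (Rabs_right a) by lra. apply Rabs_le. lra. }
    apply Sp_piece with (d2P := fun _ => - g1 (- ln a) / a).
    { intros x y z Hx Hy Hz. lra. }
    intros t Ht. split; [apply mP_d; lra|]. split; [apply dmP_d; lra|].
    unfold Rdiv. apply Rmult_le_pos. pose proof (P1 _ Hca); lra.
    left; apply Rinv_0_lt_compat; lra. }
  assert (S3 : Sp (fun t => f_fun g g1 a t) (dphi g g1 g2 a) (fun t => a <= t < E)).
  { apply Sp_exth with (phi g g1 a).
    { intros t Ht. rewrite h_outer. rewrite fmain_pos by lra. reflexivity.
      rewrite (Rabs_right a) by lra. rewrite (Rabs_right t) by lra. lra. }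
    apply Sp_piece with (d2P := d2phi g1 g2 g3 a).
    { intros x y z Hx Hy Hz. lra. }
    intros t Ht. assert (Hc : c < - ln t) by (apply cE; unfold E in *; lra).
    split; [apply (phi_d c); auto; lra|].
    split; [apply (dphi_d c); auto; lra|].
    apply d2phi_nn; auto; try lra. rewrite Rabs_right; lra. }
  pose proof (P0 _ Hca). pose proof (P1 _ Hca). pose proof (P2 _ Hca).
  assert (E1 : dpsi g g1 g2 a (- a) = -2 * g (- ln a) + 9/2 * g1 (- ln a) - 3 * g2 (- ln a))
    by (unfold dpsi; rewrite Ropp_involutive; field; lra).
  assert (E2 : dmP g g1 a (- a) = -2 * g (- ln a) + 5/2 * g1 (- ln a)) by (unfold dmP; field; lra).
  assert (E3 : dmP g g1 a a = -2 * g (- ln a) + 1/2 * g1 (- ln a)) by (unfold dmP; field; lra).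
  assert (E4 : dphi g g1 g2 a a = g (- ln a) + 1/2 * g1 (- ln a)) by (unfold dphi; field; lra).
  pose proof (Sp_glue _ _ _ (fun t => - E < t <= - a) (fun t => - a <= t <= a) (- a) ltac:(cbv beta; lra) ltac:(cbv beta; lra) ltac:(intros; cbv beta in *; lra) ltac:(intros; cbv beta in *; lra) S1 S2 ltac:(cbv beta; lra)) as S12.
  pose proof (Sp_glue _ _ _ (fun x => - E < x <= - a \/ - a <= x <= a) (fun t => a <= t < E) a ltac:(cbv beta; lra) ltac:(cbv beta; lra) ltac:(intros; cbv beta in *; lra) ltac:(intros; cbv beta in *; lra) S12 S3 ltac:(cbv beta; dec_if)) as S123.
  eexists. eapply Sp_sub; [|exact S123]. cbv beta. intros x Hx. lra.
Qed.

Lemma case_neg c g g1 g2 g3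
  (D1 : forall t, c < t -> is_derive g t (g1 t))
  (D2 : forall t, c < t -> is_derive g1 t (g2 t))
  (D3 : forall t, c < t -> is_derive g2 t (g3 t))
  (P0 : forall t, c < t -> 0 <= g t)
  (P1 : forall t, c < t -> g1 t <= 0)
  (P2 : forall t, c < t -> 0 <= g2 t)
  (P3 : forall t, c < t -> g3 t <= 0) a :
  - exp (- c) < a < 0 ->
  exists D, Sp (fun t => f_fun g g1 a t) D (fun t => - exp (- c) < t < exp (- c)).
Proof.
  intros Ha. set (E := exp (- c)) in *.
  assert (Hca : c < - ln (- a)) by (apply cE; unfold E in *; lra).
  assert (S1 : Sp (fun t => f_fun g g1 a t) (dpsi g g1 g2 a) (fun t => - E < t <= a)).
  { apply Sp_exth with (psi g g1 a).
    { intros t Ht. rewrite h_outer. rewrite fmain_neg by lra. reflexivity.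
      rewrite (Rabs_left a) by lra. rewrite (Rabs_left t) by lra. lra. }
    apply Sp_piece with (d2P := d2psi g1 g2 g3 a).
    { intros x y z Hx Hy Hz. lra. }
    intros t Ht. assert (Hc : c < - ln (- t)) by (apply cE; unfold E in *; lra).
    split; [apply (psi_d c); auto; lra|].
    split; [apply (dpsi_d c); auto; lra|].
    apply d2psi_nn; auto; try lra. rewrite Rabs_left; lra. }
  assert (S2 : Sp (fun t => f_fun g g1 a t) (dnP g g1 a) (fun t => a <= t <= - a)).
  { apply Sp_exth with (nP g g1 a).
    { intros t Ht. rewrite h_inner. rewrite fmain_nP by lra. reflexivity.
      rewrite (Rabs_left a) by lra. apply Rabs_le. lra. }
    apply Sp_piece with (d2P := fun _ => 0).
    { intros x y z Hx Hy Hz. lra. }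
    intros t Ht. split; [apply nP_d|]. split; [apply dnP_d|]. lra. }
  assert (S3 : Sp (fun t => f_fun g g1 a t) (dphi g g1 g2 a) (fun t => - a <= t < E)).
  { apply Sp_exth with (phi g g1 a).
    { intros t Ht. rewrite h_outer. rewrite fmain_pos by lra. reflexivity.
      rewrite (Rabs_left a) by lra. rewrite (Rabs_right t) by lra. lra. }
    apply Sp_piece with (d2P := d2phi g1 g2 g3 a).
    { intros x y z Hx Hy Hz. lra. }
    intros t Ht. assert (Hc : c < - ln t) by (apply cE; unfold E in *; lra).
    split; [apply (phi_d c); auto; lra|].
    split; [apply (dphi_d c); auto; lra|].
    apply d2phi_nn; auto; try lra. rewrite Rabs_left; lra. }
  pose proof (P0 _ Hca). pose proof (P1 _ Hca). pose proof (P2 _ Hca).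
  assert (E1 : dpsi g g1 g2 a a = -2 * g (- ln (- a)) + 5/2 * g1 (- ln (- a)))
    by (unfold dpsi; field; lra).
  assert (E2 : dnP g g1 a a = g (- ln (- a)) - 3/2 * g1 (- ln (- a))) by (unfold dnP; field; lra).
  assert (E3 : dnP g g1 a (- a) = g (- ln (- a)) - 3/2 * g1 (- ln (- a))) by (unfold dnP; field; lra).
  assert (E4 : dphi g g1 g2 a (- a) = g (- ln (- a)) - 7/2 * g1 (- ln (- a)) + 3 * g2 (- ln (- a))) by (unfold dphi; field; lra).
  pose proof (Sp_glue _ _ _ (fun t => - E < t <= a) (fun t => a <= t <= - a) a ltac:(cbv beta; lra) ltac:(cbv beta; lra) ltac:(intros; cbv beta in *; lra) ltac:(intros; cbv beta in *; lra) S1 S2 ltac:(cbv beta; lra)) as S12.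
  pose proof (Sp_glue _ _ _ (fun x => - E < x <= a \/ a <= x <= - a) (fun t => - a <= t < E) (- a) ltac:(cbv beta; lra) ltac:(cbv beta; lra) ltac:(intros; cbv beta in *; lra) ltac:(intros; cbv beta in *; lra) S12 S3 ltac:(cbv beta; dec_if)) as S123.
  eexists. eapply Sp_sub; [|exact S123]. cbv beta. intros x Hx. lra.
Qed.

Lemma case_zero c g g1 g2 g3
  (D1 : forall t, c < t -> is_derive g t (g1 t))
  (D2 : forall t, c < t -> is_derive g1 t (g2 t))
  (D3 : forall t, c < t -> is_derive g2 t (g3 t))
  (P0 : forall t, c < t -> 0 <= g t)
  (P1 : forall t, c < t -> g1 t <= 0)
  (P2 : forall t, c < t -> 0 <= g2 t)
  (P3 : forall t, c < t -> g3 t <= 0) :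
  exists D, Sp (fun t => f_fun g g1 0 t) D (fun t => - exp (- c) < t < exp (- c)).
Proof.
  set (E := exp (- c)).
  assert (Hh0 : f_fun g g1 0 0 = 0).
  { unfold f_fun, f_main. dec_if. }
  assert (S1 : Sp (fun t => f_fun g g1 0 t) (dpsi g g1 g2 0) (fun t => - E < t < 0)).
  { apply Sp_exth with (psi g g1 0).
    { intros t Ht. rewrite h_outer. rewrite fmain_neg by lra. reflexivity.
      rewrite Rabs_R0. apply Rabs_pos. }
    apply Sp_piece with (d2P := d2psi g1 g2 g3 0).
    { intros x y z Hx Hy Hz. lra. }
    intros t Ht. assert (Hc : c < - ln (- t)) by (apply cE; unfold E in *; lra).
    split; [apply (psi_d c); auto; lra|].
    split; [apply (dpsi_d c); auto; lra|].
    apply d2psi_nn; auto; try lra. rewrite Rabs_R0; lra. }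
  assert (S2 : Sp (fun t => f_fun g g1 0 t) (dphi g g1 g2 0) (fun t => 0 < t < E)).
  { apply Sp_exth with (phi g g1 0).
    { intros t Ht. rewrite h_outer. rewrite fmain_pos by lra. reflexivity.
      rewrite Rabs_R0. apply Rabs_pos. }
    apply Sp_piece with (d2P := d2phi g1 g2 g3 0).
    { intros x y z Hx Hy Hz. lra. }
    intros t Ht. assert (Hc : c < - ln t) by (apply cE; unfold E in *; lra).
    split; [apply (phi_d c); auto; lra|].
    split; [apply (dphi_d c); auto; lra|].
    apply d2phi_nn; auto; try lra. rewrite Rabs_R0; lra. }
  assert (S1'' : Sp (fun t => f_fun g g1 0 t) (fun x => if Req_EM_T x 0 then 0 else dpsi g g1 g2 0 x) (fun x => (- E < x < 0) \/ x = 0)).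
  { apply (Sp_ext_right _ (dpsi g g1 g2 0) (fun t => - E < t < 0) 0 0); [intros; lra| |exact S1]. intros p Hp. cbv beta. rewrite Hh0.
    rewrite h_outer by (rewrite Rabs_R0; apply Rabs_pos). rewrite fmain_neg by lra.
    assert (Hc : c < - ln (- p)) by (apply cE; unfold E in *; lra).
    pose proof (P0 _ Hc). pose proof (P1 _ Hc). pose proof (P2 _ Hc).
    set (G0 := g (- ln (- p))) in *. set (G1 := g1 (- ln (- p))) in *. set (G2 := g2 (- ln (- p))) in *.
    assert (Ea : psi g g1 0 p = - 2 * p * G0 + 3/2 * p * G1) by (unfold psi; fold G0 G1; ring).
    assert (Eb : dpsi g g1 g2 0 p = - 2 * G0 + 7/2 * G1 - 3/2 * G2) by (unfold dpsi; fold G0 G1 G2; field; lra).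
    rewrite Ea, Eb.
    assert (0 <= (- p) * G0) by (apply Rmult_le_pos; lra).
    assert (0 <= (- p) * (- G1)) by (apply Rmult_le_pos; lra).
    assert (0 <= (- p) * G2) by (apply Rmult_le_pos; lra).
    split; nra. }
  assert (S2'' : Sp (fun t => f_fun g g1 0 t) (fun x => if Req_EM_T x 0 then 0 else dphi g g1 g2 0 x) (fun x => x = 0 \/ (0 < x < E))).
  { apply (Sp_ext_left _ (dphi g g1 g2 0) (fun t => 0 < t < E) 0 0); [intros; lra| |exact S2]. intros q Hq. cbv beta. rewrite Hh0.
    rewrite h_outer by (rewrite Rabs_R0; apply Rabs_pos). rewrite fmain_pos by lra.
    assert (Hc : c < - ln q) by (apply cE; unfold E in *; lra).
    pose proof (P0 _ Hc). pose proof (P1 _ Hc). pose proof (P2 _ Hc).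
    set (G0 := g (- ln q)) in *. set (G1 := g1 (- ln q)) in *. set (G2 := g2 (- ln q)) in *.
    assert (Ea : phi g g1 0 q = q * G0 - q * G1) by (unfold phi; fold G0 G1; field; lra).
    assert (Eb : dphi g g1 g2 0 q = G0 - 2 * G1 + G2) by (unfold dphi; fold G0 G1 G2; field; lra).
    rewrite Ea, Eb.
    assert (0 <= q * G0) by (apply Rmult_le_pos; lra).
    assert (0 <= q * (- G1)) by (apply Rmult_le_pos; lra).
    assert (0 <= q * G2) by (apply Rmult_le_pos; lra).
    split; nra. }
  pose proof (Sp_glue _ _ _ (fun x => (- E < x < 0) \/ x = 0) (fun x => x = 0 \/ (0 < x < E)) 0 ltac:(cbv beta; lra) ltac:(cbv beta; lra) ltac:(intros; cbv beta in *; lra) ltac:(intros; cbv beta in *; lra) S1'' S2'' ltac:(dec_if)) as S12.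
  eexists. eapply Sp_sub; [|exact S12]. cbv beta. intros x Hx.
  destruct (Rtotal_order x 0) as [H|[H|H]]; lra.
Qed.

Lemma main_a c g g1 g2 g3
  (D1 : forall t, c < t -> is_derive g t (g1 t))
  (D2 : forall t, c < t -> is_derive g1 t (g2 t))
  (D3 : forall t, c < t -> is_derive g2 t (g3 t))
  (P0 : forall t, c < t -> 0 <= g t)
  (P1 : forall t, c < t -> g1 t <= 0)
  (P2 : forall t, c < t -> 0 <= g2 t)
  (P3 : forall t, c < t -> g3 t <= 0) a :
  - exp (- c) < a < exp (- c) ->
  exists D, Sp (fun t => f_fun g g1 a t) D (fun t => - exp (- c) < t < exp (- c)).
Proof.
  intros Ha. destruct (Rtotal_order a 0) as [H|[H|H]].
  - apply (case_neg c g g1 g2 g3); auto; lra.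
  - subst a. apply (case_zero c g g1 g2 g3); auto.
  - apply (case_pos c g g1 g2 g3); auto; lra.
Qed.

Theorem proposition8p1 (c : R) (gamma gamma1 gamma2 gamma3 : R -> R)
  (Hd1 : forall t, c < t -> is_derive gamma t (gamma1 t))
  (Hd2 : forall t, c < t -> is_derive gamma1 t (gamma2 t))
  (Hd3 : forall t, c < t -> is_derive gamma2 t (gamma3 t))
  (H0 : forall t, c < t -> 0 <= gamma t)
  (H1 : forall t, c < t -> gamma1 t <= 0)
  (H2 : forall t, c < t -> 0 <= gamma2 t)
  (H3 : forall t, c < t -> gamma3 t <= 0) :
  separately_convex (square c) (f_fun gamma gamma1).
Proof.
  intros p1 p2 q1 q2 Hor Hseg t Ht.
  assert (Hp : square c p1 p2).
  { pose proof (Hseg 0 ltac:(lra)) as H. rewrite !Rmult_0_l, !Rplus_0_r in H. exact H. }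
  assert (Hq : square c q1 q2).
  { pose proof (Hseg 1 ltac:(lra)) as H.
    replace (p1 + 1 * (q1 - p1)) with q1 in H by ring.
    replace (p2 + 1 * (q2 - p2)) with q2 in H by ring. exact H. }
  unfold square in Hp, Hq.
  destruct Hor as [E|E].
  - subst q1. replace (p1 + t * (p1 - p1)) with p1 by ring.
    destruct (main_a c gamma gamma1 gamma2 gamma3 Hd1 Hd2 Hd3 H0 H1 H2 H3 p1 ltac:(tauto)) as [D HD].
    exact (Sp_convex _ D _ _ HD p2 q2 t ltac:(tauto) ltac:(tauto) Ht).
  - subst q2. replace (p2 + t * (p2 - p2)) with p2 by ring.
    rewrite (ffun_sym gamma gamma1 (p1 + t * (q1 - p1)) p2).
    rewrite (ffun_sym gamma gamma1 p1 p2).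
    rewrite (ffun_sym gamma gamma1 q1 p2).
    destruct (main_a c gamma gamma1 gamma2 gamma3 Hd1 Hd2 Hd3 H0 H1 H2 H3 p2 ltac:(tauto)) as [D HD].
    exact (Sp_convex _ D _ _ HD p1 q1 t ltac:(tauto) ltac:(tauto) Ht).
Qed.
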